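(* Let $f:\mathcal{S}\to\mathbb{R}$ be continuously differentiable with $f^\star:=\inf_{X\in\mathcal{S}}f(X)>-\infty$, suppose $f$ is layer-wise $(L^0,L^1)$-smooth with constants $L^0,L^1\in\mathbb{R}^p_+$, and suppose $f$ satisfies the layer-wise Polyak–Łojasiewicz condition with constant $\mu>0$: $\sum_{i=1}^p\|\nabla_i f(X)\|^2_{(i)\star}\ge 2\mu(f(X)-f^\star)$ for all $X\in\mathcal{S}$. Fix $\varepsilon>0$ and let $X^0,X^1,\dots$ be the iterates of deterministic Gluon with radii $t_i^k=\frac{\|\nabla_i f(X^k)\|_{(i)\star}}{L^0_i+L^1_i\|\nabla_i f(X^k)\|_{(i)\star}}$ (assumed well defined, with $t_i^k:=0$ when $\nabla_i f(X^k)=0$). Let $\Delta^0:=f(X^0)-f^\star$, $L^0_{\max}:=\max_iL^0_i$, $L^1_{\max}:=\max_iL^1_i$. (1) With $K:=\left\lceil\frac{\Delta^0\sum_{i=1}^pL^0_i}{\mu\varepsilon}+\frac{\sqrt2L^1_{\max}\Delta^0}{\sqrt{\mu\varepsilon}}\right\rceil$ (provided $K\ge1$), $\min_{k=0,\dots,K-1}f(X^k)-f^\star\le\varepsilon$. (2) If $L^1_i=0$ for all $i=1,\dots,p$, then with $K:=\left\lceil\frac{L^0_{\max}}{\mu}\log\frac{\Delta^0}{\varepsilon}\right\rceil$, $f(X^K)-f^\star\le\varepsilon$.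
   Context: $\mathcal{S}=\mathcal{S}_1\times\cdots\times\mathcal{S}_p$ with $\mathcal{S}_i=\mathbb{R}^{m_i\times n_i}$; an element is written $X=[X_1,\dots,X_p]$. Each $\mathcal{S}_i$ carries the trace inner product $\langle X_i,Y_i\rangle_{(i)}=\operatorname{tr}(X_i^\top Y_i)$ and an arbitrary norm $\|\cdot\|_{(i)}$ with dual norm $\|Y_i\|_{(i)\star}=\sup_{\|Z_i\|_{(i)}\le 1}\langle Y_i,Z_i\rangle_{(i)}$. $\nabla_i f(X)$ is the gradient block corresponding to $X_i$. Layer-wise $(L^0,L^1)$-smoothness: for all $i$ and $X,Y\in\mathcal{S}$, $\|\nabla_i f(X)-\nabla_i f(Y)\|_{(i)\star}\le (L^0_i+L^1_i\|\nabla_i f(X)\|_{(i)\star})\|X_i-Y_i\|_{(i)}$. Deterministic Gluon: for each $k$ and $i$, $X_i^{k+1}\in\arg\min\{\langle \nabla_i f(X^k),X_i\rangle_{(i)}: \|X_i-X_i^k\|_{(i)}\le t_i^k\}$ (any minimizer), $X^{k+1}=[X_1^{k+1},\dots,X_p^{k+1}]$. $\log$ is the natural logarithm. *)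

(* Defs.v *)
From HB Require Import structures.
From mathcomp Require Import all_boot all_order all_algebra.
From mathcomp Require Import all_classical all_reals.
From mathcomp Require Import exp.
Set Implicit Arguments. Unset Strict Implicit. Unset Printing Implicit Defensive.
Import Order.TTheory GRing.Theory Num.Theory.
Local Open Scope ring_scope.
Local Open Scope classical_set_scope.

Definition prodS (R : realType) (p : nat) (m n : 'I_p -> nat) : Type :=
  forall i : 'I_p, 'M[R]_(m i, n i).

Definition ipb (R : realType) (a b : nat) (A B : 'M[R]_(a, b)) : R :=
  \tr (A^T *m B).

Definition subS (R : realType) p (m n : 'I_p -> nat) (X Y : prodS R m n)
  : prodS R m n := fun i => X i - Y i.

Definition ipS (R : realType) p (m n : 'I_p -> nat) (X Y : prodS R m n) : R :=
  \sum_(i < p) ipb (X i) (Y i).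

(* A reference norm on S (entrywise l1), only used to define
   Frechet differentiability / continuity; all norms on the finite
   dimensional space S are equivalent. *)
Definition refnS (R : realType) p (m n : 'I_p -> nat) (X : prodS R m n) : R :=
  \sum_(i < p) \sum_(a < m i) \sum_(b < n i) `|X i a b|.

Definition is_norm (R : realType) (a b : nat) (N : 'M[R]_(a, b) -> R) : Prop :=
  [/\ (forall A, 0 <= N A),
      (forall A, N A = 0 -> A = 0),
      (forall (c : R) A, N (c *: A) = `|c| * N A) &
      (forall A B, N (A + B) <= N A + N B)].

Definition dualn (R : realType) (a b : nat) (N : 'M[R]_(a, b) -> R)
  (Y : 'M[R]_(a, b)) : R :=
  sup [set ipb Y Z | Z in [set Z | N Z <= 1]].

(* f : S -> R is continuously differentiable and g is its gradient
   (w.r.t. the trace inner product): f is Frechet differentiable at every X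
   with derivative H |-> <g X, H>, and g is continuous. *)
Definition C1_with_gradient (R : realType) p (m n : 'I_p -> nat)
  (f : prodS R m n -> R) (g : prodS R m n -> prodS R m n) : Prop :=
  (forall X (e : R), 0 < e -> exists2 d : R, 0 < d &
     forall Y, refnS (subS Y X) < d ->
       `|f Y - f X - ipS (g X) (subS Y X)| <= e * refnS (subS Y X))
  /\
  (forall X (e : R), 0 < e -> exists2 d : R, 0 < d &
     forall Y, refnS (subS Y X) < d -> refnS (subS (g Y) (g X)) < e).

Definition fstar (R : realType) p (m n : 'I_p -> nat)
  (f : prodS R m n -> R) : R := inf (range f).

Definition gluon_radius (R : realType) p (m n : 'I_p -> nat)
  (N : forall i : 'I_p, 'M[R]_(m i, n i) -> R) (L0 L1 : 'I_p -> R)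
  (G : prodS R m n) (i : 'I_p) : R :=
  if G i == 0 then 0
  else dualn (N i) (G i) / (L0 i + L1 i * dualn (N i) (G i)).

Definition gluon_run (R : realType) p (m n : 'I_p -> nat)
  (N : forall i : 'I_p, 'M[R]_(m i, n i) -> R)
  (g : prodS R m n -> prodS R m n) (t : nat -> 'I_p -> R)
  (Xs : nat -> prodS R m n) : Prop :=
  forall (k : nat) (i : 'I_p),
    N i (Xs k.+1 i - Xs k i) <= t k i /\
    (forall Z : 'M[R]_(m i, n i), N i (Z - Xs k i) <= t k i ->
       ipb (g (Xs k) i) (Xs k.+1 i) <= ipb (g (Xs k) i) Z).

(* Main.v *)
Require Import Defs.
From HB Require Import structures.
From mathcomp Require Import all_boot all_order all_algebra.
From mathcomp Require Import all_classical all_reals.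
From mathcomp Require Import exp.
From mathcomp Require Import all_analysis ring lra.
Import Order.TTheory GRing.Theory Num.Theory.
Import numFieldTopology.Exports numFieldNormedType.Exports.
Local Open Scope ring_scope.
Local Open Scope classical_set_scope.

Set Implicit Arguments. Unset Strict Implicit.

Section NormEq.
Variables (R : realType) (k : nat) (Nv : 'rV[R]_k -> R).
Hypothesis HN : is_norm Nv.

Lemma Nv0 : Nv 0 = 0.
Proof. case: HN => _ _ Hh _. by rewrite -(scale0r 0) Hh normr0 mul0r. Qed.

Lemma NvN v : Nv (- v) = Nv v.
Proof. case: HN => _ _ Hh _. by rewrite -scaleN1r Hh normrN normr1 mul1r. Qed.

Lemma Nv_sum (I : Type) (s : seq I) (F : I -> 'rV[R]_k) :
  Nv (\sum_(j <- s) F j) <= \sum_(j <- s) Nv (F j).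
Proof.
case: HN => _ _ _ Ht.
elim: s => [|a s IH]; first by rewrite !big_nil Nv0.
rewrite !big_cons; apply: le_trans (Ht _ _) _; exact: lerD.
Qed.

Lemma entry_le (v : 'rV[R]_k) j : `|v 0 j| <= `|v|.
Proof.
change (`|v 0 j| <= mx_norm v); rewrite mx_normrE.
exact: (le_bigmax _ (fun ij : 'I_1 * 'I_k => `|v ij.1 ij.2|) (0, j)).
Qed.

Lemma Nv_lip : exists2 B : R, 0 <= B & forall v, Nv v <= B * `|v|.
Proof.
case: HN => Hp _ Hh _.
exists (\sum_(j < k) Nv 'e_j); first by apply: sumr_ge0 => j _.
move=> v; rewrite {1}(row_sum_delta v); apply: le_trans (Nv_sum _ _) _.
rewrite mulr_suml; apply: ler_sum => j _; rewrite Hh mulrC.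
by apply: ler_wpM2l => //; exact: entry_le.
Qed.

Lemma Nv_cont : continuous Nv.
Proof.
have [B B0 HB] := Nv_lip.
case: HN => Hp _ Hh Ht.
move=> v P /nbhs_ballP [e e0 He].
have e1 : 0 < e / (B + 1) by apply: divr_gt0 => //; lra.
apply/(@nbhs_normP R ('rV[R]_k)); exists (e / (B + 1)) => //= w; rewrite /ball_ /= => Hw.
apply: He; rewrite -ball_normE /ball_ /=.
have H1 : `|Nv v - Nv w| <= Nv (v - w).
  have h1 := Ht (v - w) w; have h2 := Ht (w - v) v; rewrite !subrK in h1 h2.
  have e2 : Nv (w - v) = Nv (v - w) by rewrite -NvN opprB.
  rewrite e2 in h2; rewrite ler_norml; apply/andP; split; lra.
apply: le_lt_trans H1 _; apply: le_lt_trans (HB _) _.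
have : B * `|v - w| <= B * (e / (B + 1)) by apply: ler_wpM2l => //; exact: ltW.
move=> H; apply: le_lt_trans H _.
rewrite mulrA ltr_pdivrMr; last lra.
have e0' : 0 < e := e0; nra.
Qed.

Lemma Nv_lb : exists2 c : R, 0 < c & forall v, c * `|v| <= Nv v.
Proof.
case: HN => Hp Hz Hh Ht.
pose S := [set v : 'rV[R]_k | `|v| = 1].
have cS : compact S.
  apply: bounded_closed_compact.
    exists 1; split => // x x1 v; rewrite /S /= => ->; exact: ltW.
  rewrite /S (_ : [set v | `|v| = 1] = Num.norm @^-1` [set 1]) //.
  apply: preimage_closed; last exact: closed_eq.
  by move=> x _; exact: norm_continuous.
have cC : compact (Nv @` S).
  by apply: continuous_compact => //; apply: continuous_subspaceT; exact: Nv_cont.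
have clC := compact_closed (@Rhausdorff R) cC.
have : nbhs (0 : R) (~` (Nv @` S)).
  apply: open_nbhs_nbhs; split; first exact: closed_openC.
  move=> [v Sv Nv0']; move: Sv; rewrite /S /= (Hz _ Nv0') normr0 => /eqP.
  by rewrite eq_sym oner_eq0.
move=> /nbhs_ballP [d d0 Hd].
exists d => // v.
have [->|v0] := eqVneq v 0; first by rewrite normr0 mulr0.
have nv0 : 0 < `|v| by rewrite normr_gt0.
pose u := `|v|^-1 *: v.
have Su : S u by rewrite /S /= normrZ normrV ?unitfE ?gt_eqF // normr_id mulVf ?gt_eqF.
have : ~ ball (0 : R) d (Nv u) by move=> /Hd; apply; exists u.
rewrite -ball_normE /ball_ /= sub0r normrN ger0_norm ?Hp // => /negP.
rewrite -leNgt /u Hh ger0_norm ?invr_ge0 ?normr_ge0 // => H.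
by move: H; rewrite mulrC ler_pdivlMr.
Qed.
End NormEq.

Section Dual.
Variables (R : realType) (a b : nat).

Lemma ipbE (Y Z : 'M[R]_(a, b)) : ipb Y Z = \sum_(j < b) \sum_(i < a) Y i j * Z i j.
Proof.
rewrite /ipb /mxtrace; apply: eq_bigr => j _; rewrite mxE.
by apply: eq_bigr => i _; rewrite mxE.
Qed.

Lemma ipbDr (Y Z W : 'M[R]_(a, b)) : ipb Y (Z + W) = ipb Y Z + ipb Y W.
Proof. by rewrite !ipbE -big_split /=; apply: eq_bigr => j _; rewrite -big_split; apply: eq_bigr => i _; rewrite mxE mulrDr. Qed.

Lemma ipbNr (Y Z : 'M[R]_(a, b)) : ipb Y (- Z) = - ipb Y Z.
Proof. rewrite !ipbE -sumrN; apply: eq_bigr => j _; rewrite -sumrN; apply: eq_bigr => i _; by rewrite mxE mulrN. Qed.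

Lemma ipbZr (Y Z : 'M[R]_(a, b)) c : ipb Y (c *: Z) = c * ipb Y Z.
Proof. rewrite !ipbE mulr_sumr; apply: eq_bigr => j _; rewrite mulr_sumr; apply: eq_bigr => i _; by rewrite mxE mulrCA. Qed.

Lemma ipbDl (Y Z W : 'M[R]_(a, b)) : ipb (Y + W) Z = ipb Y Z + ipb W Z.
Proof. by rewrite !ipbE -big_split /=; apply: eq_bigr => j _; rewrite -big_split; apply: eq_bigr => i _; rewrite mxE mulrDl. Qed.

Lemma ipbNl (Y Z : 'M[R]_(a, b)) : ipb (- Y) Z = - ipb Y Z.
Proof. rewrite !ipbE -sumrN; apply: eq_bigr => j _; rewrite -sumrN; apply: eq_bigr => i _; by rewrite mxE mulNr. Qed.

Lemma ipb0l (Z : 'M[R]_(a, b)) : ipb 0 Z = 0.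
Proof. by rewrite ipbE big1 // => j _; rewrite big1 // => i _; rewrite mxE mul0r. Qed.

Lemma ipb0r (Z : 'M[R]_(a, b)) : ipb Z 0 = 0.
Proof. by rewrite ipbE big1 // => j _; rewrite big1 // => i _; rewrite mxE mulr0. Qed.

Lemma ipb_le (Y Z : 'M[R]_(a, b)) C : (forall i j, `|Z i j| <= C) ->
  ipb Y Z <= \sum_(j < b) \sum_(i < a) `|Y i j| * C.
Proof.
move=> HC; rewrite ipbE; apply: ler_sum => j _; apply: ler_sum => i _.
apply: le_trans (ler_norm _) _; rewrite normrM; apply: ler_wpM2l => //.
Qed.

Variable (N : 'M[R]_(a, b) -> R).
Hypothesis HN : is_norm N.

Lemma N0 : N 0 = 0.
Proof. case: HN => _ _ Hh _. by rewrite -(scale0r 0) Hh normr0 mul0r. Qed.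

Lemma NN v : N (- v) = N v.
Proof. case: HN => _ _ Hh _. by rewrite -scaleN1r Hh normrN normr1 mul1r. Qed.

Lemma entry_bound : exists C : R, forall Z, N Z <= 1 -> forall i j, `|Z i j| <= C.
Proof.
case: HN => Hp Hz Hh Ht.
pose Nv (v : 'rV[R]_(a * b)) := N (vec_mx v).
have HNv : is_norm Nv.
  split; rewrite /Nv.
  - by move=> A; exact: Hp.
  - move=> A /Hz H; by rewrite -(vec_mxK A) H linear0.
  - by move=> c A; rewrite linearZ Hh.
  - by move=> A B; rewrite linearD Ht.
have [c c0 Hc] := @Nv_lb R _ Nv HNv.
exists c^-1 => Z NZ i j.
rewrite -mxvecE; apply: le_trans (@entry_le R (a * b) (mxvec Z) (mxvec_index i j)) _.
rewrite -(ler_pM2l c0) mulfV ?gt_eqF //; apply: le_trans (Hc _) _.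
by rewrite /Nv mxvecK.
Qed.

Let E Y := [set ipb Y Z | Z in [set Z | N Z <= 1]].

Lemma dual_hassup Y : has_sup (E Y).
Proof.
have [C HC] := entry_bound.
split; first by exists 0; exists 0; rewrite /= ?N0 ?ipb0r // ler01.
exists (\sum_(j < b) \sum_(i < a) `|Y i j| * C) => x [Z HZ <-].
exact: ipb_le (HC _ HZ).
Qed.

Lemma dual_in Y Z : N Z <= 1 -> ipb Y Z <= dualn N Y.
Proof. by move=> HZ; apply: (sup_upper_bound (dual_hassup Y)); exists Z. Qed.

Lemma dual_ge0 Y : 0 <= dualn N Y.
Proof. by rewrite -(ipb0r Y); apply: dual_in; rewrite N0. Qed.

Lemma dual_le Y x : (forall Z, N Z <= 1 -> ipb Y Z <= x) -> dualn N Y <= x.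
Proof.
move=> H; apply: ge_sup; first by exists 0; exists 0; rewrite /= ?N0 ?ipb0r // ler01.
by move=> y [Z HZ <-]; exact: H.
Qed.

Lemma dual0 : dualn N 0 = 0.
Proof.
apply/le_anti; rewrite dual_ge0 andbT; apply: dual_le => Z _; by rewrite ipb0l.
Qed.

Lemma dual_ub Y Z : ipb Y Z <= dualn N Y * N Z.
Proof.
case: HN => Hp Hz Hh Ht.
have [Z0|nz] := eqVneq (N Z) 0.
  by rewrite Z0 (Hz _ Z0) ipb0r mulr0.
have nzp : 0 < N Z by rewrite lt_neqAle eq_sym nz Hp.
have H := @dual_in Y ((N Z)^-1 *: Z).
rewrite ipbZr Hh ger0_norm ?invr_ge0 ?Hp // mulVf // in H.
by have := H (lexx _); rewrite mulrC -ler_pdivlMr ?invr_gt0 // invrK.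
Qed.

Lemma step_bound G X W t : 0 <= t -> 
  (forall Z, N (Z - X) <= t -> ipb G W <= ipb G Z) ->
  ipb G (W - X) <= - (t * dualn N G).
Proof.
case: HN => Hp Hz Hh Ht.
move=> t0 Hmin.
have HX : ipb G W <= ipb G X by apply: Hmin; rewrite subrr N0.
have [->|tp] := eqVneq t 0.
  by rewrite mul0r oppr0 ipbDr ipbNr subr_le0.
have tp' : 0 < t by rewrite lt_neqAle eq_sym tp t0.
have H : forall Z, N Z <= 1 -> ipb G Z <= - ipb G (W - X) / t.
  move=> Z HZ; rewrite ler_pdivlMr // mulrC.
  have H : ipb G W <= ipb G (X - t *: Z).
    apply: Hmin; rewrite addrAC subrr add0r NN Hh ger0_norm //.
    by rewrite -[X in _ <= X]mulr1; exact: ler_wpM2l.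
  move: H; rewrite !ipbDr !ipbNr ipbZr; lra.
have := @dual_le G _ H; rewrite ler_pdivlMr // => H2.
lra.
Qed.

End Dual.

Lemma creep (R : realType) (phi q : R -> R) :
  (forall s, 0 <= s <= 1 -> q s <= 0) ->
  (forall s, 0 <= s <= 1 -> forall e, 0 < e -> exists2 d, 0 < d &
     forall h, `|h| < d -> 0 <= s + h <= 1 ->
       `|phi (s + h) - phi s - h * q s| <= e * `|h|) ->
  phi 1 <= phi 0.
Proof.
move=> Hq Hd.
apply/ler_addgt0Pr => e e0.
pose A := [set s : R | 0 <= s <= 1 /\ phi s <= phi 0 + e * s].
have A0 : A 0 by split; [rewrite lexx ler01 | rewrite mulr0 addr0].
have hs : has_sup A by split; [exists 0 | exists 1 => x [/andP[_ ?] _]].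
pose sg := sup A.
have sg0 : 0 <= sg by apply: sup_upper_bound.
have sg1 : sg <= 1 by apply: ge_sup; [exists 0 | move=> x [/andP[_ ?] _]].
have sgr : 0 <= sg <= 1 by rewrite sg0 sg1.
have Asg : A sg.
  have [d d0 Hdd] := Hd _ sgr _ e0.
  have [s [/andP[s0 s1] Hs] Hss] := @sup_adherent R A d d0 hs.
  have ssg : s <= sg by apply: (sup_upper_bound hs); split => //; rewrite s0 s1.
  have := Hdd (s - sg).
  rewrite [sg + _]addrC subrK s0 s1 /= => /(_ _ isT).
  have -> : `|s - sg| = sg - s by rewrite ler0_norm ?subr_le0 // opprB.
  move=> /(_ ltac:(rewrite /sg in Hss *; lra)) H.
  split => //.
  have := Hq _ sgr => hq.
  move: H; rewrite ler_norml => /andP[H1 _].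
  have : (s - sg) * q sg >= 0 by apply: mulr_le0 => //; lra.
  have : e * s <= e * sg by apply: ler_wpM2l => //; lra.
  lra.
have sg_eq : sg = 1.
  apply/eqP; rewrite eq_le sg1 /=; apply/negP => /negP; rewrite -ltNge => sglt.
  have [d d0 Hdd] := Hd _ sgr _ e0.
  pose h := Num.min (d / 2) (1 - sg).
  have h0 : 0 < h by rewrite lt_min divr_gt0 //= subr_gt0.
  have hd : h < d by rewrite gt_min; apply/orP; left; lra.
  have h1 : h <= 1 - sg by rewrite ge_min lexx orbT.
  have := Hdd h; rewrite gtr0_norm // => /(_ hd).
  move=> /(_ ltac:(apply/andP; split; lra)).
  rewrite ler_norml => /andP[_ H2].
  have hq := Hq _ sgr.
  have : h * q sg <= 0 by apply: mulr_ge0_le0 => //; lra.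
  case: Asg => _ HA => hq'.
  have Ash : A (sg + h) by split; [apply/andP; split; lra | lra].
  have : sg + h <= sg by apply: (sup_upper_bound hs).
  lra.
case: Asg; rewrite sg_eq mulr1 //.
Qed.

Unset Implicit Arguments.

Section Descent.
Variables (R : realType) (p : nat) (m n : 'I_p -> nat)
  (N : forall i : 'I_p, 'M[R]_(m i, n i) -> R).
Hypothesis HN : forall i : 'I_p, is_norm (N i).
Variables (f : prodS R m n -> R) (g : prodS R m n -> prodS R m n).
Hypothesis Hf : C1_with_gradient f g.
Variables (L0 L1 : 'I_p -> R).
Hypotheses (HL0 : forall i, 0 <= L0 i) (HL1 : forall i, 0 <= L1 i).
Hypothesis Hsmooth : forall (i : 'I_p) (X Y : prodS R m n),
     dualn (N i) (g X i - g Y i)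
       <= (L0 i + L1 i * dualn (N i) (g X i)) * N i (X i - Y i).

Lemma refnS_ge0 (X : prodS R m n) : 0 <= refnS X.
Proof. by apply: sumr_ge0 => i _; apply: sumr_ge0 => a _; apply: sumr_ge0. Qed.

Lemma refnSZ (h : R) (D : prodS R m n) :
  refnS (fun i => h *: D i) = `|h| * refnS D.
Proof.
rewrite /refnS mulr_sumr; apply: eq_bigr => i _; rewrite mulr_sumr.
apply: eq_bigr => a _; rewrite mulr_sumr; apply: eq_bigr => b _.
by rewrite mxE normrM.
Qed.

Lemma ipSZ (G D : prodS R m n) (h : R) :
  ipS G (fun i => h *: D i) = h * ipS G D.
Proof. by rewrite /ipS mulr_sumr; apply: eq_bigr => i _; rewrite ipbZr. Qed.

Lemma descent (X Y : prodS R m n) :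
  f Y <= f X + ipS (g X) (subS Y X) +
    (\sum_(i < p) (L0 i + L1 i * dualn (N i) (g X i)) * N i (Y i - X i) ^+ 2) / 2.
Proof.
set D := subS Y X.
set C := \sum_(i < p) _.
have C0 : 0 <= C.
  apply: sumr_ge0 => i _; apply: mulr_ge0; last exact: sqr_ge0.
  by apply: addr_ge0 => //; apply: mulr_ge0 => //; exact: dual_ge0.
pose P (s : R) : prodS R m n := fun i => X i + s *: D i.
pose phi s := f (P s) - s * ipS (g X) D - s ^+ 2 * C / 2.
pose q s := ipS (g (P s)) D - ipS (g X) D - s * C.
have P0 : P 0 = X.
  by apply: functional_extensionality_dep => i; rewrite /P scale0r addr0.
have P1 : P 1 = Y.
  by apply: functional_extensionality_dep => i; rewrite /P scale1r /D /subS addrC subrK.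
have Hq : forall s, 0 <= s <= 1 -> q s <= 0.
  move=> s /andP[s0 s1].
  rewrite /q subr_le0 /ipS -sumrB /C mulr_sumr; apply: ler_sum => i _.
  rewrite -ipbNl -ipbDl.
  have -> : g (P s) i - g X i = - (g X i - g (P s) i) by rewrite opprB.
  rewrite ipbNl -ipbNr.
  apply: le_trans (dual_ub (HN i) _ _) _.
  rewrite (NN (HN i)).
  apply: le_trans.
    apply: ler_wpM2r; first by case: (HN i).
    exact: Hsmooth.
  have -> : X i - P s i = - (s *: D i) by rewrite /P opprD addrA subrr add0r.
  rewrite (NN (HN i)); case: (HN i) => _ _ Hh _; rewrite Hh ger0_norm //.
  rewrite /D /subS expr2; lra.
have Hd : forall s, 0 <= s <= 1 -> forall e, 0 < e -> exists2 d, 0 < d &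
     forall h, `|h| < d -> 0 <= s + h <= 1 ->
       `|phi (s + h) - phi s - h * q s| <= e * `|h|.
  move=> s _ e e0.
  set r := refnS D.
  have r0 : 0 <= r by exact: refnS_ge0.
  have e1 : 0 < e / (2 * (r + 1)) by apply: divr_gt0; lra.
  have [d d0 Hdd] := Hf.1 (P s) _ e1.
  exists (Num.min (d / (r + 1)) (e / (C + 1))).
    rewrite lt_min; apply/andP; split; apply: divr_gt0; lra.
  move=> h; rewrite lt_min => /andP[hd he] _.
  have Hsub : subS (P (s + h)) (P s) = (fun i => h *: D i).
    apply: functional_extensionality_dep => i.
    by rewrite /subS /P scalerDl addrA; apply/eqP; rewrite subr_eq [X in _ == X]addrC.
  have hr : `|h| * r < d.
    move: hd; rewrite ltr_pdivlMr; last lra.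
    move=> hd; apply: le_lt_trans hd; apply: ler_wpM2l => //; lra.
  have := Hdd (P (s + h)); rewrite Hsub refnSZ => /(_ hr).
  rewrite ipSZ => H.
  have -> : phi (s + h) - phi s - h * q s =
     (f (P (s + h)) - f (P s) - h * ipS (g (P s)) D) - h ^+ 2 * C / 2.
    rewrite /phi /q; move: (f (P (s + h))) (f (P s)) (ipS (g X) D) (ipS (g (P s)) D) => a1 a2 a3 a4; field; by rewrite ?pnatr_eq0.
  set A := f (P (s + h)) - f (P s) - h * ipS (g (P s)) D in H *.
  have hk : e / (2 * (r + 1)) * (2 * (r + 1)) = e by rewrite divfK //; lra.
  have hC : `|h| * (C + 1) < e by move: he; rewrite ltr_pdivlMr //; lra.
  set k := e / (2 * (r + 1)) in H hk e1.
  set u := `|h| in H hC *.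
  have u0 : 0 <= u by exact: normr_ge0.
  have hu : h ^+ 2 = u ^+ 2 by rewrite /u real_normK // num_real.
  apply: le_trans (ler_normB _ _) _.
  rewrite hu [`|u ^+ 2 * C / 2|]ger0_norm; last by apply: mulr_ge0 => //; apply: mulr_ge0 => //; exact: sqr_ge0.
  have h1 : k * (u * r) <= e * u / 2.
    have : k * (u * r) <= k * (u * (r + 1)).
      apply: ler_wpM2l; [lra | apply: ler_wpM2l => //; lra].
    have -> : k * (u * (r + 1)) = e * u / 2.
      by rewrite -[in RHS]hk; field; rewrite ?pnatr_eq0.
    done.
  have h2 : u ^+ 2 * C <= e * u.
    rewrite expr2 -mulrA mulrC; apply: ler_wpM2r => //; nra.
  rewrite -/r in H; lra.
have := @creep R phi q Hq Hd; rewrite /phi P0 P1 !expr2 !mul0r !mul1r.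
lra.
Qed.

Variable (Xs : nat -> prodS R m n).
Hypothesis Hwd : forall (k : nat) (i : 'I_p), g (Xs k) i != 0 ->
     L0 i + L1 i * dualn (N i) (g (Xs k) i) != 0.
Hypothesis Hrun : gluon_run N g (fun k i => gluon_radius N L0 L1 (g (Xs k)) i) Xs.

Lemma gluon_step k :
  f (Xs k.+1) <= f (Xs k) - \sum_(i < p) dualn (N i) (g (Xs k) i) ^+ 2 /
      (2 * (L0 i + L1 i * dualn (N i) (g (Xs k) i))).
Proof.
have := descent (Xs k) (Xs k.+1).
set X := Xs k; set Y := Xs k.+1.
move=> H; apply: le_trans H _.
rewrite -addrA lerD2l /ipS mulr_suml -big_split -sumrN /=; apply: ler_sum => i _.
set gm := dualn (N i) (g X i).
set c := L0 i + L1 i * gm.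
set t := gluon_radius N L0 L1 (g X) i.
have gm0 : 0 <= gm by exact: dual_ge0.
have c0 : 0 <= c by apply: addr_ge0 => //; apply: mulr_ge0.
have t0 : 0 <= t.
  rewrite /t /gluon_radius; case: ifP => // _; apply: divr_ge0 => //.
have [Hr1 Hr2] := Hrun k i.
have Hst := step_bound (HN i) t0 Hr2.
have Nr0 : 0 <= N i (Y i - X i) by case: (HN i).
rewrite -/t in Hr1.
have hN2 : N i (Y i - X i) ^+ 2 <= t ^+ 2.
  by rewrite !expr2; nra.
have hcN : c * N i (Y i - X i) ^+ 2 <= c * t ^+ 2 by apply: ler_wpM2l.
rewrite /subS -/gm.
case: (eqVneq (g X i) 0) => Hg.
  have tz : t = 0 by rewrite /t /gluon_radius Hg eqxx.
  have gz : gm = 0 by rewrite /gm Hg dual0.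
  have -> : gm ^+ 2 / (2 * c) = 0 by rewrite gz expr2 !mul0r.
  rewrite tz in hcN Hst; rewrite expr0n /= mulr0 in hcN.
  rewrite mul0r oppr0 in Hst; lra.
have cne : c != 0 by exact: Hwd.
have cp : 0 < c by rewrite lt_neqAle eq_sym cne c0.
have tE : t = gm / c by rewrite /t /gluon_radius (negbTE Hg).
have e1 : gm ^+ 2 / (2 * c) = c * t ^+ 2 / 2.
  by rewrite tE; field; rewrite cne ?pnatr_eq0.
have e2 : t * gm = c * t ^+ 2 by rewrite tE; field.
rewrite -/X -/Y -/gm in Hst; rewrite e1; lra.
Qed.
End Descent.

Lemma le_div_den (R : realType) (x c M : R) : 0 <= x -> 0 < c -> c <= M ->
  x / (2 * M) <= x / (2 * c).
Proof.
move=> x0 c0 cM; apply: ler_wpM2l => //.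
rewrite lef_pV2 ?posrE; lra.
Qed.

Lemma sum_term_le (R : realType) (p : nat) (F : 'I_p -> R) i :
  (forall j, 0 <= F j) -> F i <= \sum_(j < p) F j.
Proof.
move=> H; rewrite (bigD1 i) //= lerDl; apply: sumr_ge0 => j _; exact: H.
Qed.

Theorem theorem4 (R : realType) (p : nat) (m n : 'I_p -> nat)
  (N : forall i : 'I_p, 'M[R]_(m i, n i) -> R)
  (HN : forall i : 'I_p, is_norm (N i))
  (f : prodS R m n -> R) (g : prodS R m n -> prodS R m n)
  (Hf : C1_with_gradient f g)
  (Hbdd : exists lb : R, forall X, lb <= f X)
  (L0 L1 : 'I_p -> R)
  (HL0 : forall i, 0 <= L0 i) (HL1 : forall i, 0 <= L1 i)
  (Hsmooth : forall (i : 'I_p) (X Y : prodS R m n),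
     dualn (N i) (g X i - g Y i)
       <= (L0 i + L1 i * dualn (N i) (g X i)) * N i (X i - Y i))
  (mu : R) (Hmu : 0 < mu)
  (HPL : forall X : prodS R m n,
     \sum_(i < p) (dualn (N i) (g X i)) ^+ 2 >= 2 * mu * (f X - fstar f))
  (eps : R) (Heps : 0 < eps)
  (Xs : nat -> prodS R m n)
  (Hwd : forall (k : nat) (i : 'I_p), g (Xs k) i != 0 ->
     L0 i + L1 i * dualn (N i) (g (Xs k) i) != 0)
  (Hrun : gluon_run N g (fun k i => gluon_radius N L0 L1 (g (Xs k)) i) Xs) :
  let Delta0 := f (Xs 0%N) - fstar f in
  let L0max := \big[Num.max/0]_(i < p) L0 i in
  let L1max := \big[Num.max/0]_(i < p) L1 i in
  (let K := `| Num.ceil (Delta0 * (\sum_(i < p) L0 i) / (mu * eps)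
                + Num.sqrt 2 * L1max * Delta0 / Num.sqrt (mu * eps)) |%N in
   (1 <= K)%N ->
   \big[Num.min/f (Xs 0%N)]_(k < K) f (Xs k) - fstar f <= eps)
  /\
  ((forall i, L1 i = 0) ->
   let K := `| Num.max (0%R : int) (Num.ceil (L0max / mu * ln (Delta0 / eps))) |%N in
   f (Xs K) - fstar f <= eps).
Proof.
move=> Delta0 L0max L1max.
have fsle : forall X, fstar f <= f X.
  move=> X; rewrite /fstar; apply: ge_inf; last by exists X.
  by case: Hbdd => lb Hlb; exists lb => y [x _ <-]; exact: Hlb.
set fs := fstar f in fsle HPL Delta0 *.
pose D k := f (Xs k) - fs.
pose gm k i := dualn (N i) (g (Xs k) i).
pose S k := \sum_(i < p) gm k i ^+ 2 / (2 * (L0 i + L1 i * gm k i)).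
have Hstep : forall k, D k.+1 <= D k - S k.
  move=> k; have := @gluon_step R p m n N HN f g Hf L0 L1 HL0 HL1 Hsmooth Xs Hwd Hrun k.
  rewrite /D /S /gm; lra.
have gm0 : forall k i, 0 <= gm k i by move=> k i; exact: dual_ge0.
have c0 : forall k i, 0 <= L0 i + L1 i * gm k i.
  by move=> k i; apply: addr_ge0 => //; apply: mulr_ge0.
have S0 : forall k, 0 <= S k.
  move=> k; apply: sumr_ge0 => i _; apply: divr_ge0; first exact: sqr_ge0.
  by apply: mulr_ge0 => //; exact: c0.
have D0 : forall k, 0 <= D k by move=> k; rewrite /D subr_ge0.
have PL : forall k, 2 * mu * D k <= \sum_(i < p) gm k i ^+ 2 by move=> k; exact: HPL.
have gz : forall k i, gm k i != 0 -> 0 < L0 i + L1 i * gm k i.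
  move=> k i Hg; rewrite lt_neqAle eq_sym c0 andbT; apply: Hwd.
  by apply: contra Hg => /eqP Hg0; rewrite /gm Hg0 dual0.
have Dmono : forall k, D k <= D 0%N.
  elim=> [|k IH] //; apply: le_trans (Hstep k) _; have := S0 k; lra.
split; last first.
move=> HL1z; cbv zeta.
set K := `|Num.max _ _|%N.
have cE : forall k i, L0 i + L1 i * gm k i = L0 i by move=> k i; rewrite HL1z mul0r addr0.
have L0le : forall i, L0 i <= L0max by move=> i; exact: le_bigmax.
have [Lpos|Lnpos] := ltP 0 L0max; last first.
  have L0z : forall i, L0 i = 0.
    by move=> i; apply/le_anti; rewrite HL0 andbT; apply: le_trans (L0le i) Lnpos.
  have gmz : forall k i, gm k i = 0.
    move=> k i; apply/eqP/negP => /negP Hg; have := gz k i Hg.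
    by rewrite cE L0z ltxx.
  have := PL K; rewrite big1; last by move=> i _; rewrite gmz expr2 mul0r.
  move=> H; rewrite -/(D K); have := D0 K; nra.
have SL : forall k, mu * D k / L0max <= S k.
  move=> k.
  have H1 : (\sum_(i < p) gm k i ^+ 2) / (2 * L0max) <= S k.
    rewrite mulr_suml; apply: ler_sum => i _.
    rewrite cE; case: (eqVneq (gm k i) 0) => [->|Hg]; first by rewrite expr2 !mul0r.
    apply: le_div_den; [exact: sqr_ge0 | by rewrite -(cE k i); exact: gz | exact: L0le].
  apply: le_trans H1.
  have : 2 * mu * D k / (2 * L0max) <= (\sum_(i < p) gm k i ^+ 2) / (2 * L0max).
    apply: ler_wpM2r; [rewrite invr_ge0; lra | exact: PL].
  have -> : 2 * mu * D k / (2 * L0max) = mu * D k / L0max.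
    by field; rewrite ?gt_eqF ?pnatr_eq0.
  done.
set q := expR (- (mu / L0max)).
have Dq : forall k, D k.+1 <= q * D k.
  move=> k; apply: le_trans (Hstep k) _.
  have e : mu * D k / L0max = D k * (mu / L0max).
    by rewrite [mu * D k]mulrC -mulrA.
  have := SL k; rewrite e => H.
  have H2 : D k - S k <= (1 - mu / L0max) * D k by rewrite mulrBl mul1r mulrC; lra.
  apply: le_trans H2 _; apply: ler_wpM2r; first exact: D0.
  have := expR_ge1Dx (- (mu / L0max)); rewrite /q; lra.
have Dk : forall k, D k <= expR (k%:R * - (mu / L0max)) * D 0%N.
  elim=> [|k IH]; first by rewrite mul0r expR0 mul1r.
  apply: le_trans (Dq k) _.
  rewrite expRM_natl exprS -mulrA -expRM_natl.
  by apply: ler_wpM2l; [exact: expR_ge0 | exact: IH].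
rewrite -/(D K).
have [Dsmall|Dbig] := leP (D 0%N) eps; first exact: le_trans (Dmono K) Dsmall.
have DE : Delta0 = D 0%N by [].
set r := Delta0 / eps.
have r1 : 1 < r by rewrite /r ltr_pdivlMr // mul1r DE.
have lr : 0 < ln r := ln_gt0 r1.
set x := L0max / mu * ln r.
have x0 : 0 < x by apply: mulr_gt0 => //; apply: divr_gt0.
have HK : x <= K%:R.
  rewrite /K natr_absz ger0_norm; last by rewrite le_max lexx.
  apply: le_trans (ceil_ge x) _; rewrite ler_int le_max lexx orbT //.
apply: le_trans (Dk K) _.
have H : expR (K%:R * - (mu / L0max)) <= expR (x * - (mu / L0max)).
  rewrite ler_expR !mulrN lerN2; apply: ler_wpM2r => //; apply: divr_ge0; lra.
have ex : expR (x * - (mu / L0max)) = r^-1.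
  have -> : x * - (mu / L0max) = - ln r.
    by rewrite /x; field; rewrite ?gt_eqF.
  by rewrite expRN lnK // posrE; lra.
rewrite ex in H; apply: le_trans (ler_wpM2r (D0 0%N) H) _.
rewrite /r invf_div -DE divfK //; rewrite DE; lra.
cbv zeta.
set A := \sum_(i < p) L0 i.
set K := `|Num.ceil _|%N.
move=> K1.
have L0A : forall i, L0 i <= A by move=> i; apply: sum_term_le.
have L1m : forall i, L1 i <= L1max by move=> i; exact: le_bigmax.
have A0 : 0 <= A by apply: sumr_ge0.
have Lm0 : 0 <= L1max by exact: bigmax_ge_id.
set w := Num.sqrt (2 * (mu * eps)).
have me0 : 0 < mu * eps by apply: mulr_gt0.
have w0 : 0 < w by rewrite sqrtr_gt0; lra.
have w2 : w ^+ 2 = 2 * (mu * eps) by rewrite sqr_sqrtr //; lra.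
suff [k Hk] : exists k : 'I_K, D k <= eps.
  have := bigmin_le (f (Xs 0%N)) k (fun k : 'I_K => f (Xs k)).
  rewrite /D in Hk; lra.
case: (pselect (exists k : 'I_K, D k <= eps)) => // Hno; exfalso.
have Hgt : forall k, (k < K)%N -> eps < D k.
  move=> k kK; rewrite ltNge; apply/negP => H; apply: Hno; exists (Ordinal kK); exact: H.
have [ALz|ALnz] := eqVneq (A + L1max) 0.
  have Az : A = 0 by lra.
  have Lmz : L1max = 0 by lra.
  by move: K1; rewrite /K Az Lmz !mulr0 !mul0r addr0 ceil0.
set D1 := A + L1max * w.
have D1p : 0 < D1.
  have [Apos|Anpos] := ltP 0 A.
    by have := mulr_ge0 Lm0 (ltW w0); rewrite /D1; lra.
  have Lp : 0 < L1max.
    by rewrite lt_neqAle Lm0 andbT; apply: contra ALnz => /eqP <-; rewrite addr0; apply/eqP; lra.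
  by have := mulr_gt0 Lp w0; rewrite /D1; lra.
set dl := w ^+ 2 / (2 * D1).
have dl0 : 0 < dl by apply: divr_gt0; [rewrite w2; lra | lra].
have dlE : dl * (2 * D1) = w ^+ 2 by rewrite /dl divfK //; lra.
have key : forall k, (k < K)%N -> dl < S k.
  move=> k kK.
  set G := Num.sqrt (\sum_(i < p) gm k i ^+ 2).
  have sg0 : 0 <= \sum_(i < p) gm k i ^+ 2 by apply: sumr_ge0 => i _; exact: sqr_ge0.
  have G2 : G ^+ 2 = \sum_(i < p) gm k i ^+ 2 by rewrite sqr_sqrtr.
  have G0 : 0 <= G by exact: sqrtr_ge0.
  have gmG : forall i, gm k i <= G.
    move=> i; rewrite -(ger0_norm (gm0 k i)) -sqrtr_sqr ler_sqrt //.
    by apply: (@sum_term_le R p (fun j => gm k j ^+ 2)) => j; exact: sqr_ge0.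
  have Gw : w < G.
    have h1 : 2 * mu * eps < 2 * mu * D k by rewrite ltr_pM2l ?Hgt //; lra.
    have h2 := PL k.
    have : w ^+ 2 < G ^+ 2 by rewrite w2 G2 mulrA; lra.
    move=> H; rewrite ltNge; apply/negP => H3; rewrite !expr2 in H.
    have : G * G <= w * w by apply: ler_pM => //; lra.
    lra.
  set M := A + L1max * G.
  have MD1 : D1 <= M by rewrite /D1 /M lerD2l; apply: ler_wpM2l => //; exact: ltW.
  have Mp : 0 < M by lra.
  have H1 : G ^+ 2 / (2 * M) <= S k.
    rewrite G2 mulr_suml; apply: ler_sum => i _.
    case: (eqVneq (gm k i) 0) => [->|Hg]; first by rewrite expr2 !mul0r.
    apply: le_div_den; [exact: sqr_ge0 | exact: gz | ].
    apply: lerD; first exact: L0A.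
    by apply: ler_pM => //.
  apply: lt_le_trans H1.
  rewrite ltr_pdivlMr; last lra.
  have h : 2 * dl * L1max * w <= w * w.
    have : 0 <= dl * A by apply: mulr_ge0 => //; lra.
    move: dlE; rewrite /D1 expr2; nra.
  have h' : 2 * dl * L1max <= w by rewrite -(ler_pM2r w0).
  have hx : 2 * dl * L1max * (G - w) <= w * (G - w).
    by apply: ler_wpM2r => //; lra.
  have hy : w * G < G * G by rewrite ltr_pM2r //; lra.
  move: dlE; rewrite /M /D1 !expr2 => dlE'.
  nra.
have Dind : forall k, (k <= K)%N -> D k <= D 0%N - k%:R * dl.
  elim=> [|k IH] kK; first by rewrite mul0r subr0.
  have kK' : (k < K)%N := kK.
  have := IH (ltnW kK'); have := key k kK'; have := Hstep k.
  rewrite -addn1 natrD mulrDl mul1r; lra.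
pose x := Delta0 * A / (mu * eps) + Num.sqrt 2 * L1max * Delta0 / Num.sqrt (mu * eps).
have Kx : K = `|Num.ceil x|%N by [].
have DE : Delta0 = D 0%N by [].
have x0 : 0 <= x.
  rewrite /x DE; apply: addr_ge0; apply: mulr_ge0; rewrite ?invr_ge0 ?sqrtr_ge0 //.
  - by apply: mulr_ge0.
  - by apply: ltW.
  - by apply: mulr_ge0 => //; apply: mulr_ge0 => //; exact: sqrtr_ge0.
have HK : x <= K%:R.
  rewrite Kx natr_absz ger0_norm; last by rewrite ceil_ge0; lra.
  exact: ceil_ge.
have xE : x * dl = D 0%N.
  set s := Num.sqrt (mu * eps).
  have s0 : 0 < s by rewrite sqrtr_gt0.
  have s2 : s ^+ 2 = mu * eps by rewrite sqr_sqrtr //; lra.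
  have wE : w = Num.sqrt 2 * s by rewrite /w sqrtrM.
  have D1E : D1 = A + L1max * (Num.sqrt 2 * s) by rewrite /D1 wE.
  have D1n : A + L1max * (Num.sqrt 2 * s) != 0 by rewrite -D1E gt_eqF.
  rewrite /dl w2 D1E /x -DE -s2.
  rewrite sqrtr_sqr gtr0_norm //.
  by field; rewrite D1n gt_eqF ?pnatr_eq0.
have KK : K = K.-1.+1 by rewrite prednK.
have := Dind K.-1 (leq_pred K); have := key K.-1; rewrite -KK => /(_ (leqnn _)).
have := Hstep K.-1; rewrite -KK.
have := D0 K.
have : x * dl <= K%:R * dl by apply: ler_wpM2r => //; exact: ltW.
have eK : (K%:R : R) = K.-1%:R + 1 by rewrite {1}KK -addn1 natrD.
rewrite xE eK mulrDl mul1r.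
lra.
Qed.
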